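(* Let $m\ge 1$. In the chip-firing process on the self-loop graph beginning with $4m-1$ chips at site $0$ and run to completion, the number of firing moves at site $k$, for $-m\le k\le m$, is $(m-|k|)^2$.
   Context: The self-loop graph is the path graph on $\mathbb{Z}$ (each $i$ adjacent to $i\pm1$) with one self-loop at every vertex. A site can fire if it holds at least $3$ chips; firing sends one chip to each of the two neighboring sites and keeps one at the site. Running to completion means performing legal firing moves until every site has at most $2$ chips. *)

(* Defs.v *)
From mathcomp Require Import all_boot all_order all_algebra.
Set Implicit Arguments. Unset Strict Implicit. Unset Printing Implicit Defensive.
Import Order.TTheory GRing.Theory Num.Theory.
Local Open Scope ring_scope.

Definition config := int -> int.

(* Firing site x: x loses 3 chips, keeps one via the self-loop (net -2),
   and each neighbour x-1, x+1 gains one chip. *)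
Definition fire (c : config) (x : int) : config :=
  fun y => if y == x then c y - 2
           else if (y == x + 1) || (y == x - 1) then c y + 1
           else c y.

Fixpoint legal_run (c : config) (s : seq int) : Prop :=
  match s with
  | [::] => True
  | x :: s' => 3 <= c x /\ legal_run (fire c x) s'
  end.

Definition run_result (c : config) (s : seq int) : config := foldl fire c s.

Definition stable (c : config) : Prop := forall y, c y <= 2.

Definition complete_run (c : config) (s : seq int) : Prop :=
  legal_run c s /\ stable (run_result c s).

Definition init_config (m : nat) : config :=
  fun y => if y == 0 then (4 * m - 1)%:Z else 0.

(* Main.v *)
Require Import Defs.
From mathcomp Require Import all_boot all_order all_algebra.
From mathcomp Require Import zify ring.
From Stdlib Require Import Classical.
Import Order.TTheory GRing.Theory Num.Theory.
Local Open Scope ring_scope.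

Definition cnt (s : seq int) (y : int) : int := (count_mem y s)%:Z.
Definition Lap (v : int -> int) (y : int) : int := v (y-1) + v (y+1) - 2 * v y.

Lemma cnt_cons x s y : cnt (x :: s) y = (x == y)%:Z + cnt s y.
Proof. by rewrite /cnt /= PoszD. Qed.

Lemma fireE c x y : fire c x y =
  c y + (x == y - 1)%:Z + (x == y + 1)%:Z - 2 * (x == y)%:Z.
Proof.
rewrite /fire.
case: (y =P x) => h1; case: (y =P x + 1) => h2; case: (y =P x - 1) => h3;
case: (x =P y - 1) => h4; case: (x =P y + 1) => h5; case: (x =P y) => h6 /=; lia.
Qed.

Lemma runE s c y : run_result c s y = c y + Lap (cnt s) y.
Proof.
elim: s c => [|x s IH] c /=.
  by rewrite /Lap /cnt /=; lia.
rewrite /run_result /= -/(run_result _ _) IH fireE /Lap !cnt_cons. lia.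
Qed.

Lemma least_action s c v : legal_run c s -> (forall y, 0 <= v y) ->
  (forall y, c y + Lap v y <= 2) -> forall y, cnt s y <= v y.
Proof.
elim: s c v => [|x s IH] c v /=.
  by move=> _ hv _ y; rewrite /cnt /=; exact: hv.
move=> [hx hl] hv hst.
have vx : 1 <= v x.
  by have := hst x; have := hv (x-1); have := hv (x+1); have := hv x; rewrite /Lap; lia.
pose v' y := v y - (x == y)%:Z.
have hv' : forall y, 0 <= v' y.
  move=> y; rewrite /v'; case: (x =P y) => [<-|] /=; [lia| have := hv y; lia].
have hst' : forall y, fire c x y + Lap v' y <= 2.
  by move=> y; rewrite fireE /Lap /v'; have := hst y; rewrite /Lap; lia.
have := IH (fire c x) v' hl hv' hst'.
move=> H y; rewrite cnt_cons; have := H y; rewrite /v'; lia.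
Qed.

Lemma legal_rcons c t x : legal_run c t -> 3 <= run_result c t x ->
  legal_run c (rcons t x).
Proof.
elim: t c => [|y t IH] c /=; first by move=> _ h; split.
by move=> [h1 h2] h3; split => //; apply: IH.
Qed.

Definition u (m : nat) (y : int) : int :=
  if y < 0 then (if - (m%:Z) <= y then (m%:Z + y)^+2 else 0)
  else (if y <= m%:Z then (m%:Z - y)^+2 else 0).
Definition cu m y := init_config m y + Lap (u m) y.

Lemma u_ge0 m y : 0 <= u m y.
Proof. by rewrite /u; repeat case: ifP => _; rewrite ?sqr_ge0. Qed.

Lemma u_pos m y : 0 < u m y -> - (m%:Z) < y < m%:Z.
Proof.
rewrite /u; case: ifP => h1; case: ifP => h2; rewrite ?ltxx // !expr2 => h; nia.
Qed.

Ltac cu_tac := rewrite /cu /Lap /u /init_config; rewrite !expr2;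
  repeat (case: ifP => ?); nia.

Lemma cu_le2 m y : (1 <= m)%N -> cu m y <= 2.
Proof. move=> hm; cu_tac. Qed.
Lemma cu_mid m y : (1 <= m)%N -> y != 0 -> - (m%:Z) < y < m%:Z -> cu m y = 2.
Proof. move=> hm h1 h2; rewrite /cu /Lap /u /init_config; rewrite !expr2;
  repeat (case: ifP => ?); nia. Qed.

Lemma cu_0' m y : (1 <= m)%N -> y = 0 -> cu m y = 1.
Proof. move=> hm hy; rewrite /cu /Lap /u /init_config; rewrite !expr2;
  repeat (case: ifP => ?); nia. Qed.
Lemma cu_0 m : (1 <= m)%N -> cu m 0 = 1.
Proof. by move=> hm; apply: cu_0'. Qed.

Lemma side (m : nat) (g : nat -> int) : (1 <= m)%N -> g m = 0 ->
  (forall j, (j <= m)%N -> 0 <= g j) ->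
  (forall j, (0 < j < m)%N -> 2 * g j <= g j.-1 + g j.+1) ->
  g 1%N <= g 0%N /\ (g 0%N <= g 1%N -> forall j, (j <= m)%N -> g j = 0).
Proof.
move=> hm hgm hpos hconv.
have mono : forall j i, (1 <= i)%N -> (i <= j)%N -> (j <= m)%N ->
    g i - g i.-1 <= g j - g j.-1.
  elim=> [|j IH] i h1 h2 h3; first lia.
  case: (ltngtP i j.+1) => hij; [|lia|by rewrite hij].
  have := IH i h1 (ltnSE hij) (ltnW h3).
  have hj : (0 < j < m)%N by lia.
  have := hconv j hj. rewrite /=. lia.
have hm1 := mono m 1%N isT hm (leqnn m).
have hp := hpos m.-1 (leq_pred m).
split; first by move: hm1; rewrite hgm /=; lia.
move=> h01.
have up : forall k, (k <= m)%N -> g (m - k)%N <= 0.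
  elim=> [|k IH] hk; first by rewrite subn0 hgm.
  have := mono (m - k)%N 1%N isT ltac:(lia) (leq_subr _ _).
  have -> : ((m - k).-1 = m - k.+1)%N by lia.
  have := IH (ltnW hk). rewrite /=. lia.
move=> j hj; have := up (m - j)%N (leq_subr _ _).
rewrite subKn // => h; have := hpos j hj; lia.
Qed.

Lemma count_rcons (p : pred int) s x : count p (rcons s x) = (count p s + p x)%N.
Proof. by rewrite -cats1 count_cat /= addn0. Qed.

Definition P (m : nat) (t : seq int) : nat :=
  (\sum_(i < (2 * m).+1) count_mem ((i%:Z - m%:Z)%R) t)%N.

Lemma greedy m : (1 <= m)%N -> forall n : nat, exists t,
  legal_run (init_config m) t /\ (forall y, cnt t y <= u m y) /\
  (stable (run_result (init_config m) t) \/ (n <= P m t)%N).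
Proof.
move=> hm; elim=> [|n [t [hl [hw hs]]]].
  exists [::]; split => //; split; last by right.
  by move=> y; rewrite /cnt /=; exact: u_ge0.
case: (classic (stable (run_result (init_config m) t))) => hst.
  by exists t; split => //; split => //; left.
case: hs => [//|hn].
have [x hx] := not_all_ex_not _ _ hst.
have hx3 : 3 <= run_result (init_config m) t x by lia.
have hlt : cnt t x < u m x.
  have := hw x; have := hw (x-1); have := hw (x+1); have := cu_le2 m x hm.
  move: hx3; rewrite runE /cu /Lap; lia.
have hxr : - (m%:Z) < x < m%:Z.
  by apply: u_pos; move: hlt; rewrite /cnt; lia.
exists (rcons t x); split; first exact: legal_rcons.
split.
  move=> y; have := hw y; move: hlt; rewrite /cnt count_rcons PoszD /=.
  case: (x =P y) => [<-|] /=; lia.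
right.
have key : P m (rcons t x) =
    (P m t + \sum_(i < (2 * m).+1) (x == (i%:Z - m%:Z)%R))%N.
  by rewrite /P -big_split; apply: eq_bigr => i _; rewrite count_rcons.
rewrite key.
have hi : (absz ((x + m%:Z)%R) < (2 * m).+1)%N by lia.
rewrite (bigD1 (Ordinal hi)) //=.
have -> : (x == (absz ((x + m%:Z)%R))%:Z - m%:Z) = true by apply/eqP; lia.
change (nat_of_bool true) with 1%N; lia.
Qed.

Lemma u_edge m y : y = m%:Z \/ y = - m%:Z -> u m y = 0.
Proof. move=> hy; rewrite /u !expr2; repeat (case: ifP => ?); nia. Qed.

Definition B (m : nat) : nat := (\sum_(i < (2 * m).+1) absz (u m ((i%:Z - m%:Z)%R)))%N.

Lemma P_le_B m t : (forall y, cnt t y <= u m y) -> (P m t <= B m)%N.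
Proof.
move=> hw; apply: leq_sum => i _.
have := hw ((i%:Z - m%:Z)%R); have := u_ge0 m ((i%:Z - m%:Z)%R); rewrite /cnt. move=> h0 h1; by rewrite -lez_nat gez0_abs.
Qed.

Theorem lemma3p9 (m : nat) (hm : (1 <= m)%N) :
  (exists s : seq int, complete_run (init_config m) s) /\
  (forall s : seq int, complete_run (init_config m) s ->
     forall k : int, - (m%:Z) <= k <= m%:Z ->
       (count_mem k s)%:Z = (m%:Z - `|k|) ^+ 2).
Proof.
split.
  have [t [hl [hw [hs|hn]]]] := greedy m hm (B m).+1.
    by exists t.
  by have := @P_le_B m t hw; lia.
move=> s [hl hs] k hk.
have hw : forall y, cnt s y <= u m y.
  apply: least_action hl (u_ge0 m) _ => y; exact: (cu_le2 m y hm).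
have hst : forall y, init_config m y + Lap (cnt s) y <= 2.
  by move=> y; rewrite -runE; exact: hs.
have hc : forall y, 0 <= cnt s y by move=> y; rewrite /cnt.
pose d y := u m y - cnt s y.
have hd0 : forall y, 0 <= d y by move=> y; have := hw y; rewrite /d; lia.
have hum : u m m%:Z = 0 by apply: u_edge; left.
have hunm : u m (- m%:Z) = 0 by apply: u_edge; right.
have hLd : forall y, Lap d y = Lap (u m) y - Lap (cnt s) y.
  by move=> y; rewrite /Lap /d; lia.
pose g (j : nat) := d j%:Z.
pose h (j : nat) := d (- j%:Z).
have [g1 g2] : g 1%N <= g 0%N /\ (g 0%N <= g 1%N -> forall j, (j <= m)%N -> g j = 0).
  apply: side => //.
  - by rewrite /g /d hum; have := hw m; have := hc m; lia.
  - by move=> j _; exact: hd0.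
  move=> j hj.
  have e1 : Posz j.-1 = j%:Z - 1 by lia.
  have e2 : Posz j.+1 = j%:Z + 1 by lia.
  rewrite /g e1 e2.
  have hc2 : cu m j = 2 by apply: cu_mid => //; lia.
  move: hc2; have := hst j; have := hLd j; rewrite /cu /Lap; lia.
have [h1 h2] : h 1%N <= h 0%N /\ (h 0%N <= h 1%N -> forall j, (j <= m)%N -> h j = 0).
  apply: side => //.
  - by rewrite /h /d hunm; have := hw (- m%:Z); have := hc (- m%:Z); lia.
  - by move=> j _; exact: hd0.
  move=> j hj.
  have e1 : - Posz j.-1 = - j%:Z + 1 by lia.
  have e2 : - Posz j.+1 = - j%:Z - 1 by lia.
  rewrite /h e1 e2.
  have hc2 : cu m (- j%:Z) = 2 by apply: cu_mid => //; lia.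
  have L : 0 <= Lap d (- j%:Z).
    by move: hc2; have := hst (- j%:Z); have := hLd (- j%:Z); rewrite /cu /Lap; lia.
  move: L; rewrite /Lap.
  set a := d (- j%:Z - 1); set b := d (- j%:Z + 1); lia.
have hz0 : -1 <= Lap d 0.
  have := cu_0 m hm; have := hst 0; have := hLd 0; rewrite /cu /Lap; lia.
have hz : -1 <= h 1%N + g 1%N - 2 * g 0%N.
  by move: hz0; rewrite (_ : Lap d 0 = h 1%N + g 1%N - 2 * g 0%N).
have eg0 : g 0%N = d 0 by [].
have eh0 : h 0%N = d 0 by rewrite /h oppr0.
have eg1 : g 1%N = d 1 by [].
have eh1 : h 1%N = d (-1) by [].
have hall : (forall j, (j <= m)%N -> g j = 0) /\ (forall j, (j <= m)%N -> h j = 0).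
  case: (lerP (g 0%N) (g 1%N)) => c1.
    have G := g2 c1; split => //; apply: h2.
    have := G 0%N (leq0n _); have := hd0 (-1); lia.
  have c2 : h 0%N <= h 1%N by lia.
  have H := h2 c2; split => //; apply: g2.
  have := H 0%N (leq0n _); have := hd0 1; lia.
case: hall => hg hh.
have hdk : d k = 0.
  case: k hk => j hk.
    by apply: hg; lia.
  rewrite NegzE; apply: hh; lia.
have huk : u m k = (m%:Z - `|k|) ^+ 2.
  rewrite /u; case: ifP => c1.
    rewrite ifT; last lia.
    by rewrite ltr0_norm // opprK.
  by rewrite ifT ?gez0_abs //; lia.
rewrite -huk; move: hdk; rewrite /d /cnt; lia.
Qed.
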